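(* Let $d,n\ge 1$, let $\eta\in\mathbb{R}$, and let $S=\{(\mathbf{x}^S_i,y^S_i)\}_{i=1}^{|S|}$ and $T=\{(\mathbf{x}^T_j,y^T_j)\}_{j=1}^{|T|}$ be datasets with $\mathbf{x}\in\mathbb{R}^d$, $y\in\mathbb{R}$, where $n=|S|$. For a dataset $D$ and weights $\mathbf{w}\in\mathbb{R}^{|D|}$ define the loss $\mathcal{L}(\boldsymbol{\theta};D,\mathbf{w})=\sum_{i=1}^{|D|}w_i(\langle\mathbf{x}^D_i,\boldsymbol{\theta}\rangle-y^D_i)^2$ for $\boldsymbol{\theta}\in\mathbb{R}^d$. Let $\mathbf{g}_T(\boldsymbol{\theta})=\nabla_{\boldsymbol{\theta}}\mathcal{L}(\boldsymbol{\theta};T,\mathbb{1})$, $\mathbf{H}_T=\nabla^2_{\boldsymbol{\theta}}\mathcal{L}(\boldsymbol{\theta};T,\mathbb{1})$, $\mathbf{g}_{\mathbf{w}}(\boldsymbol{\theta})=\nabla_{\boldsymbol{\theta}}\mathcal{L}(\boldsymbol{\theta};S,\mathbf{w})$ and $\mathbf{H}_{\mathbf{w}}=\nabla^2_{\boldsymbol{\theta}}\mathcal{L}(\boldsymbol{\theta};S,\mathbf{w})$ (the Hessians do not depend on $\boldsymbol{\theta}$). Let $\mathbf{G}_S(\boldsymbol{\theta})\in\mathbb{R}^{n\times d}$ be the matrix whose $i$-th row is $\nabla_{\boldsymbol{\theta}}(\langle\mathbf{x}^S_i,\boldsymbol{\theta}\rangle-y^S_i)^2$, and define $\mathbf{p}(\boldsymbol{\theta})=\mathbf{G}_S(\boldsymbol{\theta})\mathbf{g}_T(\boldsymbol{\theta})$,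 $\mathbf{Q}(\boldsymbol{\theta})=\mathbf{G}_S(\boldsymbol{\theta})\mathbf{H}_T\mathbf{G}_S(\boldsymbol{\theta})^T$ and $f(\mathbf{w};\boldsymbol{\theta})=-\mathbf{p}(\boldsymbol{\theta})^T\mathbf{w}+\frac{\eta}{2}\mathbf{w}^T\mathbf{Q}(\boldsymbol{\theta})\mathbf{w}$. Define $\mathbf{a}_{\mathbf{w}}=-\mathbf{H}_{\mathbf{w}}\mathbf{g}_T(\boldsymbol{\theta})-\mathbf{H}_T\mathbf{g}_{\mathbf{w}}(\boldsymbol{\theta})+\eta\mathbf{H}_{\mathbf{w}}\mathbf{H}_T\mathbf{g}_{\mathbf{w}}(\boldsymbol{\theta})$ and $\mathbf{B}_{\mathbf{w}}=-\mathbf{H}_T\mathbf{H}_{\mathbf{w}}+\frac{\eta}{2}\mathbf{H}_{\mathbf{w}}\mathbf{H}_T\mathbf{H}_{\mathbf{w}}$. Then for all $\boldsymbol{\theta},\boldsymbol{\delta}\in\mathbb{R}^d$ and $\mathbf{w}\in\mathbb{R}^n$, $f(\mathbf{w};\boldsymbol{\theta}+\boldsymbol{\delta})=f(\mathbf{w};\boldsymbol{\theta})+\mathbf{a}_{\mathbf{w}}^T\boldsymbol{\delta}+\boldsymbol{\delta}^T\mathbf{B}_{\mathbf{w}}\boldsymbol{\delta}$.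
   Context: $\mathbb{1}$ denotes the all-ones vector of the appropriate length. The quantities $\mathbf{g}_{\mathbf{w}}$, $\mathbf{a}_{\mathbf{w}}$, $\mathbf{B}_{\mathbf{w}}$ are evaluated at the base point $\boldsymbol{\theta}$. *)

(* Defs.v *)
From HB Require Import structures.
From mathcomp Require Import all_boot all_order all_algebra.
From mathcomp Require Import all_classical all_reals all_analysis.
Set Implicit Arguments. Unset Strict Implicit. Unset Printing Implicit Defensive.
Import Order.TTheory GRing.Theory Num.Theory.
Import numFieldNormedType.Exports.
Local Open Scope ring_scope.

Section Defs.
Variable R : realType.

Definition dotv (d : nat) (u v : 'cV[R]_d) : R := \sum_(k < d) u k ord0 * v k ord0.

Definition evec (d : nat) (j : 'I_d) : 'cV[R]_d := delta_mx j ord0.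

Definition grad (d : nat) (f : 'cV[R]_d -> R) (th : 'cV[R]_d) : 'cV[R]_d :=
  \col_(j < d) ('D_(evec j) f th).

Definition hess (d : nat) (f : 'cV[R]_d -> R) (th : 'cV[R]_d) : 'M[R]_d :=
  \matrix_(i < d, j < d) ('D_(evec j) (fun t => 'D_(evec i) f t) th).

Definition loss (d m : nat) (x : 'I_m -> 'cV[R]_d) (y : 'I_m -> R)
  (w : 'cV[R]_m) (th : 'cV[R]_d) : R :=
  \sum_(i < m) w i ord0 * (dotv (x i) th - y i) ^+ 2.

Definition ones (m : nat) : 'cV[R]_m := const_mx 1.

Definition GS (d n : nat) (xS : 'I_n -> 'cV[R]_d) (yS : 'I_n -> R)
  (th : 'cV[R]_d) : 'M[R]_(n, d) :=
  \matrix_(i < n, j < d) grad (fun t => (dotv (xS i) t - yS i) ^+ 2) th j ord0.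

Definition fobj (d n m : nat) (xS : 'I_n -> 'cV[R]_d) (yS : 'I_n -> R)
  (xT : 'I_m -> 'cV[R]_d) (yT : 'I_m -> R) (eta : R)
  (w : 'cV[R]_n) (th : 'cV[R]_d) : R :=
  let gT := grad (loss xT yT (ones m)) th in
  let HT := hess (loss xT yT (ones m)) th in
  let G := GS xS yS th in
  let p := G *m gT in
  let Q := G *m HT *m G^T in
  - (p^T *m w) ord0 ord0 + eta / 2 * (w^T *m Q *m w) ord0 ord0.

End Defs.

(* Main.v *)
Require Import Defs.
From HB Require Import structures.
From mathcomp Require Import all_boot all_order all_algebra.
From mathcomp Require Import all_classical all_reals all_analysis.
From mathcomp Require Import ring lra.
Import Order.TTheory GRing.Theory Num.Theory.
Import numFieldNormedType.Exports.
Set Implicit Arguments. Unset Strict Implicit.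
Local Open Scope ring_scope.
Lemma D_quad (R : realType) (d : nat) (f : 'cV[R]_d -> R) x v (B C : R) :
  (forall h : R, f (x + h *: v) = f x + B * h + C * h ^+ 2) -> 'D_v f x = B.
Proof.
move=> H; rewrite /derive; apply: cvg_lim => //.
apply: (@cvg_trans _ ((fun h : R => B + C * h) @ 0^')%classic).
  apply: near_eq_cvg; near=> h.
  have hn : h != 0 by near: h; exact: nbhs_dnbhs_neq.
  rewrite /= [h *: v + x]addrC H.
  rewrite [X in _ *: X](_ : _ = h * (B + C * h)); last by ring.
  by rewrite [_ *: _]mulrA mulVf // mul1r.
apply: cvg_within_filter.
have L : ((fun h : R => B + C * h) @ (nbhs (0:R)) --> B + C * 0)%classic.
  apply: cvgD; first exact: cvg_cst.
  apply: cvgMl_tmp; exact: cvg_id.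
by rewrite mulr0 addr0 in L.
Unshelve. all: by end_near.
Qed.

Lemma tr11 (R : realType) (M : 'M[R]_1) : M^T = M.
Proof. by apply/matrixP => i j; rewrite mxE !ord1. Qed.

Lemma trD (R : realType) m k (A B : 'M[R]_(m, k)) : (A + B)^T = A^T + B^T.
Proof. by apply/matrixP => i j; rewrite !mxE. Qed.
Lemma trN (R : realType) m k (A : 'M[R]_(m, k)) : (- A)^T = - A^T.
Proof. by apply/matrixP => i j; rewrite !mxE. Qed.
Lemma trZ (R : realType) m k (a : R) (A : 'M[R]_(m, k)) : (a *: A)^T = a *: A^T.
Proof. by apply/matrixP => i j; rewrite !mxE. Qed.

Lemma final (R : realType) (d n : nat) (gT gT' gw : 'cV[R]_d) (HT Hw : 'M[R]_d)
  (G G' : 'M[R]_(n, d)) (w : 'cV[R]_n) (delta : 'cV[R]_d) (eta : R) :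
  HT^T = HT -> Hw^T = Hw -> G^T *m w = gw -> G'^T *m w = gw + Hw *m delta ->
  gT' = gT + HT *m delta ->
  let aw := - (Hw *m gT) - HT *m gw + eta *: (Hw *m HT *m gw) in
  let Bw := - (HT *m Hw) + (eta / 2) *: (Hw *m HT *m Hw) in
  - ((G' *m gT')^T *m w) ord0 ord0 + eta / 2 * (w^T *m (G' *m HT *m G'^T) *m w) ord0 ord0
  = (- ((G *m gT)^T *m w) ord0 ord0 + eta / 2 * (w^T *m (G *m HT *m G^T) *m w) ord0 ord0)
    + (aw^T *m delta) ord0 ord0 + (delta^T *m Bw *m delta) ord0 ord0.
Proof.
move=> sT sw hG hG' hT aw Bw.
have E (K : 'M[R]_(n, d)) : w^T *m (K *m HT *m K^T) *m w = (K^T *m w)^T *m HT *m (K^T *m w).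
  by rewrite trmx_mul trmxK !mulmxA.
rewrite !E hG hG' !trmx_mul -!mulmxA hG hG' hT /aw /Bw.
rewrite !(trD, trN, trZ) !trmx_mul !sT !sw.
rewrite !(mulmxDl, mulmxDr, mulmxN, mulNmx, scalemxAl, scalemxAr) !mulmxA.
rewrite -!scalemxAr -!scalemxAl.
have e1 : delta^T *m HT *m gw = gw^T *m HT *m delta.
  by rewrite -[LHS]tr11 !trmx_mul trmxK sT mulmxA.
have e2 : delta^T *m Hw *m HT *m gw = gw^T *m HT *m Hw *m delta.
  by rewrite -[LHS]tr11 !trmx_mul trmxK sT sw !mulmxA.
rewrite e1 e2.
move: (gT^T *m gw) (gT^T *m Hw *m delta) (gw^T *m HT *m delta) (delta^T *m HT *m Hw *m delta)
  (gw^T *m HT *m gw) (gw^T *m HT *m Hw *m delta) (delta^T *m Hw *m HT *m Hw *m delta).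
move=> A1 A2 A3 A4 A5 A6 A7; rewrite !mxE.
by field.
Qed.




Lemma ordz (z : 'I_1) : z = ord0. Proof. exact: ord1. Qed.

Section S.
Variable R : realType.
Variable d : nat.

Lemma dotvD (a t v : 'cV[R]_d) (h : R) : dotv a (t + h *: v) = dotv a t + h * dotv a v.
Proof.
rewrite /dotv mulr_sumr -big_split /=; apply: eq_bigr => k _.
rewrite !mxE; ring.
Qed.

Lemma dotv_e (a : 'cV[R]_d) j : dotv a (evec R j) = a j ord0.
Proof.
rewrite /dotv (bigD1 j) //= big1 ?addr0.
  by rewrite mxE !eqxx mulr1.
by move=> k /negbTE nk; rewrite mxE nk mulr0.
Qed.

Definition gradL m (x : 'I_m -> 'cV[R]_d) (y : 'I_m -> R) (w : 'cV[R]_m) th : 'cV[R]_d :=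
  \col_(j < d) \sum_(k < m) w k ord0 * (2 * (dotv (x k) th - y k)) * x k j ord0.

Definition hessL m (x : 'I_m -> 'cV[R]_d) (w : 'cV[R]_m) : 'M[R]_d :=
  \matrix_(i < d, j < d) \sum_(k < m) w k ord0 * 2 * x k i ord0 * x k j ord0.

Lemma D_loss m x y w i t :
  'D_(evec R i) (@loss R d m x y w) t = gradL x y w t i ord0.
Proof.
rewrite mxE; apply: (D_quad (C := \sum_(k < m) w k ord0 * x k i ord0 ^+ 2)) => h.
rewrite /loss mulr_suml mulr_suml -!big_split /=; apply: eq_bigr => k _.
rewrite dotvD dotv_e; ring.
Qed.

Lemma grad_loss m x y w t : grad (@loss R d m x y w) t = gradL x y w t.
Proof. apply/matrixP => i j; rewrite /grad !mxE ord1 D_loss /gradL mxE. by []. Qed.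

Lemma hess_loss m x y w t : hess (@loss R d m x y w) t = hessL x w.
Proof.
apply/matrixP => i j; rewrite !mxE.
have -> : (fun t => 'D_(evec R i) (@loss R d m x y w) t) = (fun t => gradL x y w t i ord0).
  by apply: funext => s; rewrite D_loss.
apply: (D_quad (C := 0)) => h.
rewrite !mxE mulr_suml -big_split /= mul0r addr0; apply: eq_bigr => k _.
rewrite dotvD dotv_e; ring.
Qed.

Lemma GS_eq (x : 'cV[R]_d) (y : R) t j :
  'D_(evec R j) (fun s => (dotv x s - y) ^+ 2) t = 2 * (dotv x t - y) * x j ord0.
Proof.
apply: (D_quad (C := x j ord0 ^+ 2)) => h.
rewrite dotvD dotv_e; ring.
Qed.

Lemma GS_w n (x : 'I_n -> 'cV[R]_d) y t w : (GS x y t)^T *m w = gradL x y w t.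
Proof.
apply/matrixP => j z; rewrite (ordz z) !mxE; apply: eq_bigr => k _.
rewrite !mxE GS_eq; ring.
Qed.

Lemma gradL_shift m x y w t delta :
  @gradL m x y w (t + delta) = gradL x y w t + hessL x w *m delta.
Proof.
apply/matrixP => j z; rewrite (ordz z) !mxE.
under [X in _ = _ + X]eq_bigr do rewrite mxE mulr_suml.
rewrite exchange_big /= -big_split /=; apply: eq_bigr => k _.
have -> : t + delta = t + 1 *: delta by rewrite scale1r.
rewrite dotvD mul1r.
have -> : \sum_(i < d) w k ord0 * 2 * x k j ord0 * x k i ord0 * delta i ord0
  = w k ord0 * 2 * x k j ord0 * dotv (x k) delta.
  by rewrite /dotv mulr_sumr; apply: eq_bigr => i _; ring.
ring.
Qed.

Lemma hessL_sym m x w : (@hessL m x w)^T = hessL x w.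
Proof. by apply/matrixP => i j; rewrite !mxE; apply: eq_bigr => k _; ring. Qed.
End S.

Theorem lemma1 (R : realType) (d n m : nat) (hd : (0 < d)%N) (hn : (0 < n)%N)
  (eta : R) (xS : 'I_n -> 'cV[R]_d) (yS : 'I_n -> R)
  (xT : 'I_m -> 'cV[R]_d) (yT : 'I_m -> R)
  (th delta : 'cV[R]_d) (w : 'cV[R]_n) :
  let gT := grad (loss xT yT (ones R m)) th in
  let HT := hess (loss xT yT (ones R m)) th in
  let gw := grad (loss xS yS w) th in
  let Hw := hess (loss xS yS w) th in
  let aw := - (Hw *m gT) - HT *m gw + eta *: (Hw *m HT *m gw) in
  let Bw := - (HT *m Hw) + (eta / 2) *: (Hw *m HT *m Hw) in
  fobj xS yS xT yT eta w (th + delta) =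
    fobj xS yS xT yT eta w th + (aw^T *m delta) ord0 ord0
    + (delta^T *m Bw *m delta) ord0 ord0.
Proof.
move=> gT HT gw Hw aw Bw.
rewrite /aw /Bw /gw /Hw /gT /HT /fobj /= !grad_loss !hess_loss.
apply: final.
- exact: hessL_sym.
- exact: hessL_sym.
- exact: GS_w.
- by rewrite GS_w gradL_shift.
- exact: gradL_shift.
Qed.
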